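(* Let $X,Y$ be finitely supported subsets of invariant sets. (1) $X$ is FSM Dedekind infinite if and only if there exists a finitely supported injective map $\mathbb N\to X$ (with $\mathbb N$ carrying the trivial action). (4) If $X$ contains no infinite uniformly supported subset, then $X$ is not FSM Dedekind infinite. (6) If neither $X$ nor $Y$ is FSM Dedekind infinite, then $X\times Y$ is not FSM Dedekind infinite. (7) If neither $X$ nor $Y$ is FSM Dedekind infinite, then $X+Y$ is not FSM Dedekind infinite.
   Context: Framework (FSM). Work in ZF with a fixed infinite set $A$ of atoms; $S_A$ is the group of bijections of $A$ fixing all but finitely many atoms; $Fix(S)$ is the set of $\pi\in S_A$ fixing each element of $S\subseteq A$; $S$ supports $x$ if $\pi\cdot x=x$ for all $\pi\in Fix(S)$. An invariant set is an $S_A$-set all of whose elements have finite supports; subsets carry $\pi\star Z=\{\pi\cdot z:z\in Z\}$ and a subset is finitely supported if it has a finite support under this action. Ordinary sets such as $\mathbb N$ carry the trivial action. Products carry $\pi\cdot(x,y)=(\pi\cdot x,\pi\cdot y)$; $X+Y=\{(0,x):x\in X\}\cup\{(1,y):y\in Y\}$ with $\pi\cdot(i,z)=(i,\pi\cdot z)$. A function is finitely supported if there is a finite $S$ such that for all $\pi\in Fix(S)$ and $x$ in the domain, $\pi$ preserves domain and codomain and $f(\pi\cdot x)=\pi\cdot f(x)$. A subset is uniformly supported if all its elements are supported by one common finite set of atoms. $X$ is FSM Dedekind infinite if there is a finitely supported injection from $X$ onto a finitely supported proper subset of $X$. *)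

(* Defs.v *)
From Stdlib Require Import List.
Import ListNotations.
Set Implicit Arguments.

Record fperm (A : Type) := FPerm {
  pf : A -> A;
  pinv : A -> A;
  pf_pinv : forall a, pinv (pf a) = a;
  pinv_pf : forall a, pf (pinv a) = a;
  pf_fin : exists l : list A, forall a, ~ In a l -> pf a = a }.

Definition infinite_type (A : Type) : Prop := forall l : list A, exists a, ~ In a l.

Definition fixes {A : Type} (S : list A) (p : fperm A) : Prop :=
  forall a, In a S -> pf p a = a.

Definition supports {A X : Type} (act : fperm A -> X -> X) (S : list A) (x : X) : Prop :=
  forall p, fixes S p -> act p x = x.

Record invset (A : Type) := InvSet {
  carrier :> Type;
  act : fperm A -> carrier -> carrier;
  act_id : forall p x, (forall a, pf p a = a) -> act p x = x;
  act_comp : forall p q r x, (forall a, pf r a = pf p (pf q a)) ->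
                             act r x = act p (act q x);
  act_fin : forall x, exists S : list A, supports act S x }.

Arguments act {A} i p _.

Definition pstar {A : Type} (U : invset A) (p : fperm A) (Z : U -> Prop) : U -> Prop :=
  fun y => exists x, Z x /\ y = act U p x.

Definition fs_subset {A : Type} (U : invset A) (Z : U -> Prop) : Prop :=
  exists S : list A, forall p, fixes S p -> forall y, pstar U p Z y <-> Z y.

Definition fs_fun {A : Type} (U V : invset A) (X : U -> Prop) (Y : V -> Prop)
  (f : U -> V) : Prop :=
  (forall x, X x -> Y (f x)) /\
  exists S : list A, forall p, fixes S p ->
    (forall y, pstar U p X y <-> X y) /\
    (forall y, pstar V p Y y <-> Y y) /\
    (forall x, X x -> f (act U p x) = act V p (f x)).

Definition inj_on {U V : Type} (X : U -> Prop) (f : U -> V) : Prop :=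
  forall x y, X x -> X y -> f x = f y -> x = y.

Definition fsm_dedekind_infinite {A : Type} (U : invset A) (X : U -> Prop) : Prop :=
  exists (Z : U -> Prop) (f : U -> U),
    fs_subset U Z /\ (forall z, Z z -> X z) /\ (exists x, X x /\ ~ Z x) /\
    fs_fun U U X Z f /\ inj_on X f /\
    (forall z, Z z -> exists x, X x /\ f x = z).

Definition finite_subset {U : Type} (Z : U -> Prop) : Prop :=
  exists l : list U, forall z, Z z -> In z l.

Definition uniformly_supported {A : Type} (U : invset A) (Z : U -> Prop) : Prop :=
  exists S : list A, forall z, Z z -> supports (act U) S z.

Definition nat_invset (A : Type) : invset A.
Proof.
  refine (@InvSet A nat (fun _ n => n) _ _ _); auto.
  intros x; exists []; intros p _; reflexivity.
Defined.

Lemma fixes_app_l {A : Type} (S1 S2 : list A) p : fixes (S1 ++ S2) p -> fixes S1 p.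
Proof. intros H a Ha; apply H, in_or_app; auto. Qed.
Lemma fixes_app_r {A : Type} (S1 S2 : list A) p : fixes (S1 ++ S2) p -> fixes S2 p.
Proof. intros H a Ha; apply H, in_or_app; auto. Qed.

Definition prod_invset {A : Type} (U V : invset A) : invset A.
Proof.
  refine (@InvSet A (U * V)%type
            (fun p xy => (act U p (fst xy), act V p (snd xy))) _ _ _).
  - intros p [x y] H; simpl; f_equal; apply act_id; auto.
  - intros p q r [x y] H; simpl; f_equal; apply act_comp; auto.
  - intros [x y]. destruct (act_fin U x) as [S1 H1]. destruct (act_fin V y) as [S2 H2].
    exists (S1 ++ S2); intros p Hp; simpl; f_equal.
    + apply H1; eapply fixes_app_l; eauto.
    + apply H2; eapply fixes_app_r; eauto.
Defined.

(* disjoint union X + Y with pi.(i,z) = (i, pi.z); tags 0/1 rendered as inl/inr *)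
Definition sum_invset {A : Type} (U V : invset A) : invset A.
Proof.
  refine (@InvSet A (U + V)%type
            (fun p s => match s with inl x => inl (act U p x)
                                   | inr y => inr (act V p y) end) _ _ _).
  - intros p [x|y] H; f_equal; apply act_id; auto.
  - intros p q r [x|y] H; f_equal; apply act_comp; auto.
  - intros [x|y].
    + destruct (act_fin U x) as [S H]; exists S; intros p Hp; f_equal; auto.
    + destruct (act_fin V y) as [S H]; exists S; intros p Hp; f_equal; auto.
Defined.

Definition prod_subset {U V : Type} (X : U -> Prop) (Y : V -> Prop) : U * V -> Prop :=
  fun xy => X (fst xy) /\ Y (snd xy).

Definition sum_subset {U V : Type} (X : U -> Prop) (Y : V -> Prop) : U + V -> Prop :=
  fun s => match s with inl x => X x | inr y => Y y end.

(* Main.v *)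
Require Import Defs.
From Stdlib Require Import List FinFun Classical ClassicalEpsilon Lia Arith.
Import ListNotations.

Definition finv {A : Type} (p : fperm A) : fperm A.
Proof.
  refine (@FPerm A (pinv p) (pf p) (pinv_pf p) (pf_pinv p) _).
  destruct (pf_fin p) as [l Hl]. exists l. intros a Ha.
  transitivity (pinv p (pf p a)); [rewrite Hl; auto | apply pf_pinv].
Defined.

Definition idp (A : Type) : fperm A :=
  @FPerm A (fun a => a) (fun a => a) (fun a => eq_refl) (fun a => eq_refl)
    (ex_intro _ [] (fun a _ => eq_refl)).

Lemma act_finv_l {A : Type} (U : invset A) p x : act U (finv p) (act U p x) = x.
Proof.
  rewrite <- (act_comp U (finv p) p (idp A) x).
  - apply act_id; intros; reflexivity.
  - intros a; simpl; symmetry; apply pf_pinv.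
Qed.

Lemma act_finv_r {A : Type} (U : invset A) p x : act U p (act U (finv p) x) = x.
Proof.
  rewrite <- (act_comp U p (finv p) (idp A) x).
  - apply act_id; intros; reflexivity.
  - intros a; simpl; symmetry; apply pinv_pf.
Qed.

Lemma fixes_finv {A : Type} (S : list A) p : fixes S p -> fixes S (finv p).
Proof.
  intros H a Ha; simpl.
  transitivity (pinv p (pf p a)); [rewrite H; auto | apply pf_pinv].
Qed.

Lemma act_inj {A : Type} (U : invset A) p x y : act U p x = act U p y -> x = y.
Proof.
  intros H; apply (f_equal (act U (finv p))) in H; rewrite !act_finv_l in H; exact H.
Qed.

Lemma L_fwd {A : Type} (U : invset A) (X : U -> Prop) :
  fsm_dedekind_infinite U X ->
  exists (h : nat -> U) (S : list A), (forall n m, h n = h m -> n = m) /\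
    (forall n, X (h n)) /\ (forall n, supports (act U) S (h n)).
Proof.
  intros [Z [f [hZ [ZX [[x0 [Xx0 nZx0]] [[fXZ [Sf Hf]] [finj fsurj]]]]]]].
  destruct (act_fin U x0) as [S0 H0].
  exists (fun n => Nat.iter n f x0), (Sf ++ S0).
  assert (HXh : forall n, X (Nat.iter n f x0)).
  { induction n; simpl; auto. }
  split; [|split; auto].
  - induction n; intros m Hm; destruct m; auto; simpl in Hm.
    all: try (exfalso; apply nZx0; first [rewrite Hm | rewrite <- Hm]; apply fXZ; auto; fail).
    all: try (f_equal; apply IHn; apply finj; auto).
  - induction n; intros p Hp; simpl.
    + apply H0; eapply fixes_app_r; eauto.
    + destruct (Hf p (fixes_app_l _ _ Hp)) as [_ [_ He]].
      rewrite <- He by auto. rewrite IHn; auto.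
Qed.

Lemma L_bwd {A : Type} (U : invset A) (X : U -> Prop) (hX : fs_subset U X)
  (h : nat -> U) (Sh : list A) :
  (forall n m, h n = h m -> n = m) -> (forall n, X (h n)) ->
  (forall n, supports (act U) Sh (h n)) -> fsm_dedekind_infinite U X.
Proof.
  intros hi hXh hs.
  destruct hX as [SX HX].
  set (f := fun x : U =>
    match excluded_middle_informative (exists n, x = h n) with
    | left e => h (S (proj1_sig (constructive_indefinite_description _ e)))
    | right _ => x end).
  assert (fh : forall n, f (h n) = h (S n)).
  { intros n; unfold f. destruct excluded_middle_informative as [e|ne].
    - destruct constructive_indefinite_description as [m Hm]; simpl.
      apply hi in Hm; subst; auto.
    - exfalso; apply ne; eauto. }
  assert (fo : forall x, ~ (exists n, x = h n) -> f x = x).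
  { intros x ne; unfold f. destruct excluded_middle_informative as [e|_]; tauto. }
  exists (fun x => X x /\ x <> h 0), f.
  assert (HXp : forall p, fixes (Sh ++ SX) p -> forall y, X (act U p y) <-> X y).
  { intros p Hp y. pose proof (HX p (fixes_app_r _ _ Hp)) as H1.
    pose proof (HX (finv p) (fixes_finv _ _ (fixes_app_r _ _ Hp))) as H2.
    split; intros Hy.
    - rewrite <- (act_finv_l U p y). apply H2. exists (act U p y); auto.
    - apply H1. exists y; auto. }
  assert (HZp : forall p, fixes (Sh ++ SX) p -> forall y,
     pstar U p (fun x => X x /\ x <> h 0) y <-> X y /\ y <> h 0).
  { intros p Hp y. split.
    - intros [x [[Xx nx] ->]]. split; [apply HXp; auto|].
      intros E. apply nx. rewrite <- (hs 0 p (fixes_app_l _ _ Hp)) in E.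
      eapply act_inj; eauto.
    - intros [Xy ny]. exists (act U (finv p) y). split; [split|].
      + rewrite <- HXp by eauto. rewrite act_finv_r; auto.
      + intros E. apply ny. rewrite <- (act_finv_r U p y), E.
        apply hs; eapply fixes_app_l; eauto.
      + rewrite act_finv_r; auto. }
  split; [exists (Sh ++ SX); apply HZp|].
  split; [tauto|].
  split; [exists (h 0); split; auto; tauto|].
  split; [split|split].
  - intros x Xx. destruct (classic (exists n, x = h n)) as [[n ->]|ne].
    + rewrite fh; split; auto. intros E; apply hi in E; discriminate.
    + rewrite fo; auto. split; auto. intros ->; apply ne; eauto.
  - exists (Sh ++ SX). intros p Hp. split; [|split].
    + intros y; unfold pstar. split.
      * intros [x [Xx ->]]; apply HXp; auto.
      * intros Xy; exists (act U (finv p) y); split; [|rewrite act_finv_r; auto].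
        rewrite <- HXp by eauto. rewrite act_finv_r; auto.
    + apply HZp; auto.
    + intros x Xx. destruct (classic (exists n, x = h n)) as [[n ->]|ne].
      * rewrite (hs n p (fixes_app_l _ _ Hp)), fh.
        symmetry; apply hs; eapply fixes_app_l; eauto.
      * rewrite (fo x ne). apply fo. intros [n E]. apply ne. exists n.
        rewrite <- (hs n p (fixes_app_l _ _ Hp)) in E. eapply act_inj; eauto.
  - intros x y Xx Xy.
    destruct (classic (exists n, x = h n)) as [[n ->]|nx];
    destruct (classic (exists n, y = h n)) as [[m ->]|ny].
    + rewrite !fh; intros E; apply hi in E; injection E; intros; subst; auto.
    + rewrite fh, (fo y ny); intros E; exfalso; apply ny; eauto.
    + rewrite fh, (fo x nx); intros E; exfalso; apply nx; eauto.
    + rewrite (fo x nx), (fo y ny); auto.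
  - intros z [Xz nz]. destruct (classic (exists n, z = h n)) as [[n ->]|ne].
    + destruct n as [|n]; [tauto|]. exists (h n); split; auto.
    + exists z; split; auto.
Qed.

Fixpoint build {U : Type} (c : list U -> U) (n : nat) : list U :=
  match n with 0 => [] | S n => c (build c n) :: build c n end.

Lemma build_in {U : Type} (c : list U -> U) : forall m n, m < n -> In (c (build c m)) (build c n).
Proof.
  intros m n; induction n; intros H; [lia|].
  simpl. destruct (Nat.eq_dec m n) as [->|ne]; [left; auto|right; apply IHn; lia].
Qed.

Lemma inf_choice {U : Type} (R : U -> Prop) :
  (forall l : list U, exists x, R x /\ ~ In x l) ->
  exists h : nat -> U, (forall n m, h n = h m -> n = m) /\ forall n, R (h n).
Proof.
  intros H.
  set (c := fun l => proj1_sig (constructive_indefinite_description _ (H l))).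
  assert (Hc : forall l, R (c l) /\ ~ In (c l) l).
  { intros l; unfold c; destruct constructive_indefinite_description; auto. }
  exists (fun n => c (build c n)). split; [|intros; apply Hc].
  intros n m E. destruct (Nat.lt_total n m) as [lt|[eq|gt]]; auto; exfalso.
  - apply (proj2 (Hc (build c m))). rewrite <- E. apply build_in; auto.
  - apply (proj2 (Hc (build c n))). rewrite E. apply build_in; auto.
Qed.

Lemma nat_inj_fin {T : Type} (h : nat -> T) (l : list T) :
  (forall n m, h n = h m -> n = m) -> (forall n, In (h n) l) -> False.
Proof.
  intros hi hl.
  assert (N : NoDup (map h (seq 0 (S (length l))))).
  { apply Injective_map_NoDup; [exact hi | apply seq_NoDup]. }
  assert (I : incl (map h (seq 0 (S (length l)))) l).
  { intros x Hx; apply in_map_iff in Hx; destruct Hx as [n [<- _]]; auto. }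
  pose proof (NoDup_incl_length N I) as L.
  rewrite length_map, length_seq in L; lia.
Qed.

Lemma not_inf_fin {U : Type} (R : U -> Prop) :
  ~ (forall l : list U, exists x, R x /\ ~ In x l) ->
  exists l, forall x, R x -> In x l.
Proof.
  intros H. apply not_all_ex_not in H. destruct H as [l Hl]. exists l.
  intros x Rx. apply NNPP; intros ni; apply Hl; eauto.
Qed.

Theorem mainTheorem9 (A : Type) (HA : infinite_type A) (U V : invset A)
  (X : U -> Prop) (Y : V -> Prop) (hX : fs_subset U X) (hY : fs_subset V Y) :
  (* (1) *)
  (fsm_dedekind_infinite U X <->
     exists f : nat -> U,
       fs_fun (nat_invset A) U (fun _ => True) X f /\ inj_on (fun _ => True) f) /\
  (* (4) *)
  ((~ exists Z : U -> Prop, (forall z, Z z -> X z) /\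
        uniformly_supported U Z /\ ~ finite_subset Z) ->
     ~ fsm_dedekind_infinite U X) /\
  (* (6) *)
  (~ fsm_dedekind_infinite U X -> ~ fsm_dedekind_infinite V Y ->
     ~ fsm_dedekind_infinite (prod_invset U V) (prod_subset X Y)) /\
  (* (7) *)
  (~ fsm_dedekind_infinite U X -> ~ fsm_dedekind_infinite V Y ->
     ~ fsm_dedekind_infinite (sum_invset U V) (sum_subset X Y)).
Proof.
  split; [split|split; [|split]].
  - intros D. destruct (L_fwd _ _ D) as [h [S [hi [hXh hs]]]].
    exists h. split; [|intros x y _ _; apply hi].
    split; [intros; apply hXh|].
    destruct hX as [SX HX]. exists (S ++ SX). intros p Hp. split; [|split].
    + intros y; unfold pstar; simpl. split; auto. intros _; exists y; auto.
    + eapply HX, fixes_app_r, Hp.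
    + intros x _. simpl. symmetry. apply hs. eapply fixes_app_l, Hp.
  - intros [h [[hXh [S Hh]] hinj]].
    apply (L_bwd U X hX h S); [intros n m; apply hinj; auto | intros; apply hXh; auto |].
    intros n p Hp. destruct (Hh p Hp) as [_ [_ He]].
    specialize (He n I); simpl in He; auto.
  - intros Hno D. destruct (L_fwd _ _ D) as [h [S [hi [hXh hs]]]].
    apply Hno. exists (fun z => exists n, z = h n). split; [intros z [n ->]; auto|].
    split; [exists S; intros z [n ->]; auto|].
    intros [l Hl]. apply (nat_inj_fin h l hi). intros n; apply Hl; eauto.
  - intros nX nY D. destruct (L_fwd _ _ D) as [h [S [hi [hXY hs]]]].
    destruct (classic (forall l, exists x, (exists n, fst (h n) = x) /\ ~ In x l)) as [I1|F1].
    { destruct (inf_choice _ I1) as [h1 [i1 r1]]. apply nX, (L_bwd U X hX h1 S); auto.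
      - intros n; destruct (r1 n) as [m <-]; apply (hXY m).
      - intros n p Hp. destruct (r1 n) as [m <-]. pose proof (hs m p Hp) as e.
        apply (f_equal fst) in e; exact e. }
    destruct (classic (forall l, exists x, (exists n, snd (h n) = x) /\ ~ In x l)) as [I2|F2].
    { destruct (inf_choice _ I2) as [h1 [i1 r1]]. apply nY, (L_bwd V Y hY h1 S); auto.
      - intros n; destruct (r1 n) as [m <-]; apply (hXY m).
      - intros n p Hp. destruct (r1 n) as [m <-]. pose proof (hs m p Hp) as e.
        apply (f_equal snd) in e; exact e. }
    destruct (not_inf_fin _ F1) as [l1 L1]. destruct (not_inf_fin _ F2) as [l2 L2].
    apply (nat_inj_fin h (list_prod l1 l2) hi). intros n.
    destruct (h n) as [a b] eqn:E. apply in_prod.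
    + apply L1; exists n; rewrite E; auto.
    + apply L2; exists n; rewrite E; auto.
  - intros nX nY D. destruct (L_fwd _ _ D) as [h [S [hi [hXY hs]]]].
    destruct (classic (forall l, exists x, (exists n, h n = inl x) /\ ~ In x l)) as [I1|F1].
    { destruct (inf_choice _ I1) as [h1 [i1 r1]]. apply nX, (L_bwd U X hX h1 S); auto.
      - intros n; destruct (r1 n) as [m E]; pose proof (hXY m) as Z; rewrite E in Z; exact Z.
      - intros n p Hp. destruct (r1 n) as [m E]. pose proof (hs m p Hp) as e.
        rewrite E in e. simpl in e. injection e; auto. }
    destruct (classic (forall l, exists x, (exists n, h n = inr x) /\ ~ In x l)) as [I2|F2].
    { destruct (inf_choice _ I2) as [h1 [i1 r1]]. apply nY, (L_bwd V Y hY h1 S); auto.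
      - intros n; destruct (r1 n) as [m E]; pose proof (hXY m) as Z; rewrite E in Z; exact Z.
      - intros n p Hp. destruct (r1 n) as [m E]. pose proof (hs m p Hp) as e.
        rewrite E in e. simpl in e. injection e; auto. }
    destruct (not_inf_fin _ F1) as [l1 L1]. destruct (not_inf_fin _ F2) as [l2 L2].
    apply (nat_inj_fin h (map inl l1 ++ map inr l2) hi). intros n.
    apply in_or_app. destruct (h n) as [a|b] eqn:E.
    + left; apply in_map, L1; eauto.
    + right; apply in_map, L2; eauto.
Qed.
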